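(* Let $F$ be a field of characteristic zero, $n,m$ natural numbers, and $l\in W(n,m)$ a nonzero element. Then the ideal of $W(n,m)$ generated by $l$ contains a nonzero element $l'$ such that in every basis element $e^{\alpha}x^{\beta}\partial_p$ occurring in $l'$ with nonzero coefficient, all components of $\beta$ are positive integers.
   Context: $W(n,m)$ has basis $e^{\alpha}x^{\beta}\partial_i$ ($\alpha\in\mathbb Z^n$, $\beta\in\mathbb Z^{n+m}$, $1\le i\le n+m$), realized as vector fields $f\partial_i$ with $f$ in the commutative algebra with basis $e^{\alpha}x^{\beta}$ (multiplication adding exponents), $\partial_i(e^{\alpha}x^{\beta})=a_ie^{\alpha}x^{\beta}+b_ie^{\alpha}x^{\beta-\epsilon_i}$ with $a_i:=0$ for $i>n$, and bracket $[f\partial_i,g\partial_j]=f\partial_i(g)\partial_j-g\partial_j(f)\partial_i$. *)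

(* Defs.v *)
From HB Require Import structures.
From mathcomp Require Import all_boot all_order all_algebra.
From mathcomp Require Import finmap.
From mathcomp.multinomials Require Import monalg.
Set Implicit Arguments. Unset Strict Implicit. Unset Printing Implicit Defensive.
Import Order.TTheory GRing.Theory Num.Theory.
Local Open Scope ring_scope.

(* Index of a basis element e^alpha x^beta d_i of W(n,m):
   alpha : Z^n, beta : Z^(n+m), i : 'I_(n+m)  (0-based: i = 0..n+m-1,
   corresponding to 1..n+m in the paper; "i <= n" in the paper = "i < n" here). *)
Definition Wkey (n m : nat) : choiceType :=
  ({ffun 'I_n -> int} * {ffun 'I_(n + m) -> int} * 'I_(n + m))%type.

Definition W (F : fieldType) (n m : nat) := {malg F[Wkey n m]}.

Section Bracket.
Variables (F : fieldType) (n m : nat).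

Definition acomp (al : {ffun 'I_n -> int}) (i : 'I_(n + m)) : int :=
  match insub (val i) : option 'I_n with Some j => al j | None => 0 end.

Definition eps (i : 'I_(n + m)) : {ffun 'I_(n + m) -> int} :=
  [ffun j => (j == i)%:Z].

Definition bas (c : F) (al : {ffun 'I_n -> int}) (be : {ffun 'I_(n + m) -> int})
  (i : 'I_(n + m)) : W F n m := << c *g ((al, be, i) : Wkey n m) >>.

(* (e^al x^be) d_i (e^ga x^de) d_j  =  a_i e^(al+ga) x^(be+de) d_j
                                     + b_i e^(al+ga) x^(be+de-eps_i) d_j,
   where ga = (a_k), de = (b_k). *)
Definition term_der (al : {ffun 'I_n -> int}) (be : {ffun 'I_(n + m) -> int}) (i : 'I_(n + m))
  (ga : {ffun 'I_n -> int}) (de : {ffun 'I_(n + m) -> int}) (j : 'I_(n + m)) : W F n m :=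
  bas ((acomp ga i)%:~R) (al + ga) (be + de) j
  + bas ((de i)%:~R) (al + ga) (be + de - eps i) j.

(* bracket of two basis elements:
   [f d_i, g d_j] = f d_i(g) d_j - g d_j(f) d_i *)
Definition brkey (k1 k2 : Wkey n m) : W F n m :=
  let: (al, be, i) := k1 in let: (ga, de, j) := k2 in
  term_der al be i ga de j - term_der ga de j al be i.

Definition bracket (u v : W F n m) : W F n m :=
  \sum_(k1 <- msupp u) \sum_(k2 <- msupp v) (u@_k1 * v@_k2) *: brkey k1 k2.

Inductive in_ideal (l : W F n m) : W F n m -> Prop :=
  | ideal_gen : in_ideal l l
  | ideal_zero : in_ideal l 0
  | ideal_add u v : in_ideal l u -> in_ideal l v -> in_ideal l (u + v)
  | ideal_scale (c : F) u : in_ideal l u -> in_ideal l (c *: u)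
  | ideal_brl (w u : W F n m) : in_ideal l u -> in_ideal l (bracket w u)
  | ideal_brr (w u : W F n m) : in_ideal l u -> in_ideal l (bracket u w).

End Bracket.

(* Main.v *)
Require Import Defs.
From HB Require Import structures.
From mathcomp Require Import all_boot all_order all_algebra.
From mathcomp Require Import finmap zify ring.
From mathcomp.multinomials Require Import monalg.
Import Order.TTheory GRing.Theory Num.Theory.
Local Open Scope ring_scope.
Lemma shift_eq n m (g x y : {ffun 'I_(n + m) -> int}) :
  (x + g == y + g) = (x == y).
Proof. exact: (inj_eq (addIr g)). Qed.
Lemma coefU (F:fieldType) n m (c:F) (a b : Wkey n m) : (<< c *g a >> : W F n m)@_b = c *+ (a == b).
Proof. exact: mcoeffU. Qed.
Lemma coefbas (F:fieldType) n m (c:F) al be i (b : Wkey n m) : (bas c al be i)@_b = c *+ (((al,be,i) : Wkey n m) == b).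
Proof. exact: mcoeffU. Qed.
Lemma coefD (F:fieldType) n m (x y : W F n m) (b : Wkey n m) : (x + y)@_b = x@_b + y@_b.
Proof. exact: mcoeffD. Qed.
Lemma coefB (F:fieldType) n m (x y : W F n m) (b : Wkey n m) : (x - y)@_b = x@_b - y@_b.
Proof. exact: mcoeffB. Qed.
Lemma brkey_coef (F : fieldType) n m (g : {ffun 'I_(n + m) -> int}) (j : 'I_(n+m))
   (al : {ffun 'I_n -> int}) (be : {ffun 'I_(n + m) -> int}) (k : 'I_(n+m))
   (al0 : {ffun 'I_n -> int}) (be0 : {ffun 'I_(n + m) -> int}) (i0 : 'I_(n+m)) :
  (brkey F ((0, g, j) : Wkey n m) (al, be, k))@_((al0, be0 + g - eps i0, i0) : Wkey n m)
  = (acomp al j)%:~R *+ (((al, be, k) : Wkey n m) == (al0, be0 - eps i0, i0))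
  + (be j)%:~R *+ (((al, be - eps j, k) : Wkey n m) == (al0, be0 - eps i0, i0))
  - (g k)%:~R *+ (((al, be - eps k, j) : Wkey n m) == (al0, be0 - eps i0, i0)).
Proof.
rewrite /brkey /term_der /=.
rewrite coefB [X in X - _]coefD [X in _ - X]coefD.
rewrite [X in X + _ - _]coefbas [X in _ + X - _]coefbas [X in _ - (X + _)]coefbas [X in _ - (_ + X)]coefbas.
have hz : acomp (0 : {ffun 'I_n -> int}) k = 0.
  by rewrite /acomp; case: insub => // ?; rewrite ffunE.
have E1 : forall (a : {ffun 'I_n -> int}) (b c : {ffun 'I_(n + m) -> int}) (d : 'I_(n+m)),
  (((a, b + g - c, d) : Wkey n m) == (al0, be0 + g - eps i0, i0)) =
  (((a, b - c, d) : Wkey n m) == (al0, be0 - eps i0, i0)).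
  move=> a b c d; rewrite !xpair_eqE.
  by rewrite (addrAC b) (addrAC be0) shift_eq.
have h1 : (((0 + al, g + be, k) : Wkey n m) == (al0, be0 + g - eps i0, i0)) =
   (((al, be, k) : Wkey n m) == (al0, be0 - eps i0, i0)).
  by rewrite -[be in RHS]subr0 -E1 add0r addrC subr0.
have h2 : (((0 + al, g + be - eps j, k) : Wkey n m) == (al0, be0 + g - eps i0, i0)) =
   (((al, be - eps j, k) : Wkey n m) == (al0, be0 - eps i0, i0)).
  by rewrite -E1 add0r (addrC g).
have h4 : (((al + 0, be + g - eps k, j) : Wkey n m) == (al0, be0 + g - eps i0, i0)) =
   (((al, be - eps k, j) : Wkey n m) == (al0, be0 - eps i0, i0)).
  by rewrite -E1 addr0.
rewrite h1 h2 h4 hz mulr0z mul0rn add0r.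
by [].
Qed.

Lemma fD (T : finType) (f g : {ffun T -> int}) t : (f + g) t = f t + g t.
Proof. by rewrite ffunE. Qed.
Lemma fN (T : finType) (f : {ffun T -> int}) t : (- f) t = - f t.
Proof. by rewrite ffunE. Qed.
Lemma fB (T : finType) (f g : {ffun T -> int}) t : (f - g) t = f t - g t.
Proof. by rewrite fD fN. Qed.
Lemma eps0 n m (j t : 'I_(n+m)) : 0 <= eps j t.
Proof. by rewrite /eps ffunE; case: (t == j). Qed.
Lemma eps1 n m (j t : 'I_(n+m)) : eps j t <= 1.
Proof. by rewrite /eps ffunE; case: (t == j). Qed.

Lemma brkey_supp (F : fieldType) n m (g : {ffun 'I_(n + m) -> int}) (j : 'I_(n+m))
   (al : {ffun 'I_n -> int}) (be : {ffun 'I_(n + m) -> int}) (k : 'I_(n+m))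
   (K : Wkey n m) :
  (brkey F ((0, g, j) : Wkey n m) (al, be, k))@_K != 0 ->
  forall t, be t + g t - 1 <= K.1.2 t.
Proof.
rewrite /brkey /term_der /=.
rewrite coefB [X in X - _]coefD [X in _ - X]coefD.
rewrite [X in X + _ - _]coefbas [X in _ + X - _]coefbas [X in _ - (X + _)]coefbas [X in _ - (_ + X)]coefbas.
case: K => [[a b] i] H t /=.
case: (((0 + al, g + be, k) : Wkey n m) =P (a, b, i)) H => [[_ <- _] _ | _].
  by rewrite fD; move: (be t) (g t) => x y; lia.
case: (((0 + al, g + be - eps j, k) : Wkey n m) =P (a, b, i)) => [[_ <- _] _ | _].
  by rewrite fB fD; have := @eps0 _ _ j t; have := @eps1 _ _ j t; move: (eps j t) (be t) (g t) => e x y h1 h2; lia.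
case: (((al + 0, be + g, j) : Wkey n m) =P (a, b, i)) => [[_ <- _] _ | _].
  by rewrite fD; move: (be t) (g t) => x y; lia.
case: (((al + 0, be + g - eps k, j) : Wkey n m) =P (a, b, i)) => [[_ <- _] _ | _].
  by rewrite fB fD; have := @eps0 _ _ k t; have := @eps1 _ _ k t; move: (eps k t) (be t) (g t) => e x y h1 h2; lia.
by rewrite !mulr0n subrr eqxx.
Qed.

Lemma mcoeff_sum (F : fieldType) (K : choiceType) (I : Type) (r : seq I)
  (f : I -> {malg F[K]}) k :
  (\sum_(i <- r) f i)@_k = \sum_(i <- r) (f i)@_k.
Proof.
elim: r => [|a r IH]; first by rewrite !big_nil mcoeff0.
by rewrite !big_cons mcoeffD IH.
Qed.

Lemma bracket_coef (F : fieldType) n m (g : {ffun 'I_(n + m) -> int}) j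
  (l : W F n m) K :
  (bracket (bas 1 0 g j) l)@_K =
  \sum_(k2 <- msupp l) l@_k2 * (brkey F ((0, g, j) : Wkey n m) k2)@_K.
Proof.
rewrite /bracket /bas msuppU oner_eq0 big_seq_fset1 mcoeffUU mcoeff_sum.
by apply: eq_bigr => k2 _; rewrite mcoeffZ mul1r.
Qed.

Lemma coef_self (F : fieldType) n m (l : W F n m) (K : Wkey n m) :
  \sum_(k2 <- msupp l) l@_k2 *+ (k2 == K) = l@_K.
Proof.
rewrite [in RHS](monalgE l) mcoeff_sum.
by apply: eq_bigr => k2 _; rewrite coefU.
Qed.

Lemma sum_neq0 (F : fieldType) (T : eqType) (r : seq T) (f : T -> F) :
  \sum_(i <- r) f i != 0 -> has (fun i => f i != 0) r.
Proof.
move=> H; apply/negPn/negP => /hasPn Hn; move: H.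
by rewrite big_seq big1 ?eqxx // => i /Hn /negPn /eqP.
Qed.

Lemma bound_ex n m (s : seq (Wkey n m)) :
  exists B : nat, forall (k : Wkey n m) t, k \in s -> (`|k.1.2 t| <= B)%N.
Proof.
elim: s => [|x s [B IH]]; first by exists 0%N.
exists (B + \sum_(t : 'I_(n + m)) `|x.1.2 t|)%N => k t.
rewrite in_cons => /orP [/eqP -> | kin].
  by rewrite (bigD1 t) //= addnCA leq_addr.
by apply: (leq_trans (IH k t kin)); apply: leq_addr.
Qed.

Lemma subsub (F : fieldType) (X a b : F) : (X - a) - (X - b) = b - a.
Proof. by ring. Qed.

Theorem lemma1 (F : fieldType) (hF : [pchar F] =i pred0) (n m : nat)
  (l : W F n m) (hl : l != 0) :
  exists l' : W F n m,
    [/\ in_ideal l l', l' != 0 &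
        forall k : Wkey n m, k \in msupp l' ->
          forall t : 'I_(n + m), (0 < k.1.2 t)%R].
Proof.
case: (fset_0Vmem (msupp l)) => [E0 | [K0 K0in]].
  by move: hl; rewrite (monalgE l) E0 big_seq_fset0 eqxx.
case: K0 K0in => [[al0 be0] i0] K0in.
have [B HB] := @bound_ex n m (msupp l).
pose gam (s : bool) : {ffun 'I_(n+m) -> int} :=
  [ffun t => ((B + 2 + (s && (t == i0)))%N)%:Z].
pose f s := bracket (bas 1 0 (gam s) i0) l.
have Hid s : in_ideal l (f s) by apply: ideal_brl; apply: ideal_gen.
have Hpos s : forall k : Wkey n m, k \in msupp (f s) -> forall t, 0 < k.1.2 t.
  move=> k; rewrite -mcoeff_neq0 bracket_coef => /sum_neq0 /hasP [[[al be] kk] kin].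
  rewrite mulf_eq0 negb_or => /andP [_ /brkey_supp H] t.
  have Hg : ((B + 2)%N)%:Z <= gam s t by rewrite ffunE lez_nat leq_addr.
  have := H t; have := HB _ t kin => /=.
  move: (be t) (k.1.2 t) (gam s t) Hg => x y z; lia.
have Hd : (f true)@_((al0, be0 + gam true - eps i0, i0) : Wkey n m)
        - (f false)@_((al0, be0 + gam false - eps i0, i0) : Wkey n m)
        = - l@_((al0, be0, i0) : Wkey n m).
  rewrite /f !bracket_coef -sumrB -coef_self -sumrN.
  apply: eq_bigr => [[[al be] k]] _.
  rewrite !brkey_coef -mulrBr subsub /gam !ffunE /=.
  case: (k =P i0) => [-> | /eqP ne].
    have -> : (((al, be - eps i0, i0) : Wkey n m) == (al0, be0 - eps i0, i0))
        = (((al, be, i0) : Wkey n m) == (al0, be0, i0)).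
      by rewrite !xpair_eqE (inj_eq (addIr _)).
    case: (_ == _); last by rewrite !mulr0n subrr mulr0 oppr0.
    rewrite !mulr1n -!pmulrn /= !natrD.
    by ring.
  have -> : (((al, be, k) : Wkey n m) == (al0, be0, i0)) = false.
    by rewrite !xpair_eqE (negbTE ne) andbF.
  by rewrite /= subrr mulr0 mulr0n oppr0.
case E: (f true == 0).
  exists (f false); split => //.
  apply/negP => /eqP E0; move/eqP: E => E1.
  move: Hd; rewrite E0 E1 !mcoeff0 subrr => /eqP.
  by rewrite eq_sym oppr_eq0 mcoeff_eq0 K0in.
  exact: Hpos.
exists (f true); split => //; last exact: Hpos.
by rewrite E.
Qed.
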